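(* Let $X$ be well ordered, $\Omega=\{D\}$ with $D$ unary, $\lambda\in K$, and order $\mathfrak{S}(X)$ by order $(2)$. Then $$S=\{D(xy)-D(x)y-xD(y)-\lambda D(x)D(y)\mid x,y\in\mathfrak{S}(X)\}$$ is a Gröbner–Shirshov basis in $K\langle X;D\rangle$.
   Context: General setup (here $\Omega=\{D\}$). $K$ is a commutative ring with unit; $S(Y)$ is the free semigroup on $Y$. $\mathfrak{S}_0=S(X)$, $\mathfrak{S}_n=S(X\cup\{D(u)\mid u\in\mathfrak{S}_{n-1}\})$, $\mathfrak{S}(X)=\bigcup_n\mathfrak{S}_n$; $K\langle X;D\rangle$ is the free $K$-module on $\mathfrak{S}(X)$ with concatenation product and $D$ extended linearly. Prime words are elements of $X\cup\{D(u)\}$; $bre(u)$ is the number of prime factors. $\mathfrak{S}^\star(X)$: words on $X\cup\{\star\}$ with exactly one $\star$; $u|_s$: substitution. Monomial ordering: well order with $w>v\Rightarrow u|_w>u|_v$. $\bar f$ = leading word, monic = leading coefficient $1$. Compositions of monic $f,g$: intersection $(f,g)_w=fa-bg$ when $w=\bar fa=b\bar g$, $a,b\in\mathfrak{S}(X)$, $bre(w)<bre(\bar f)+bre(\bar g)$; including $(f,g)_w=f-u|_g$ when $w=\bar f=u|_{\bar g}$, $u\in\mathfrak{S}^\star(X)$. $p\equiv q\ \mathrm{mod}(S,w)$ means $p-q=\sum\alpha_iu_i|_{s_i}$, $s_i\in S$, $u_i|_{\overline{s_i}}<w$. $S$ is a Gröbner–Shirshov basis if all its compositions are $\equiv0\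 \mathrm{mod}(S,w)$. Order (2): each $u\in\mathfrak{S}(X)$ is uniquely $u=u_1\cdots u_n$ with $u_i\in X\cup D(\mathfrak{S}(X))$; $deg_X(u)$ is the number of occurrences of letters of $X$ in $u$; $wt(u)=(deg_X(u),u_1,\dots,u_n)$, and $u>v$ iff $wt(u)>wt(v)$ lexicographically, where prime words are compared by: for $x,y\in X$, $x>y$ per the order on $X$; $D(u')>x$ for all $x\in X$; $D(u')>D(v')$ iff $u'>v'$. *)

(* Defs.v *)
From HB Require Import structures.
From mathcomp Require Import all_boot all_order all_algebra.
From Stdlib Require List.
Set Implicit Arguments. Unset Strict Implicit. Unset Printing Implicit Defensive.
Import Order.TTheory GRing.Theory.
Local Open Scope ring_scope.

(* Free operated semigroup S(X) with one unary operator D.             *)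
(* A prime word is a letter x in X or D(u) with u a (nonempty) word;  *)
(* D(u) with u = p1 p2 ... pn is represented as  PD p1 [:: p2;..;pn]. *)
(* A word is a nonempty sequence of prime words: (head, tail).        *)
Section Words.
Context {disp : Order.disp_t} (X : orderType disp).

Inductive prim : Type :=
| PX of X
| PD of prim & seq prim.

Definition word : Type := (prim * seq prim)%type.

Fixpoint prim_enc (p : prim) : GenTree.tree X :=
  match p with
  | PX x => GenTree.Leaf x
  | PD q qs => GenTree.Node 0 (prim_enc q :: map prim_enc qs)
  end.

Fixpoint prim_dec (t : GenTree.tree X) : option prim :=
  match t with
  | GenTree.Leaf x => Some (PX x)
  | GenTree.Node _ ts =>
      match ts with
      | [::] => None
      | t0 :: ts' =>
          match prim_dec t0 with
          | Some q => Some (PD q (pmap prim_dec ts'))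
          | None => None
          end
      end
  end.

Lemma prim_encK_aux (p : prim) : prim_dec (prim_enc p) = Some p.
Proof.
revert p; fix IH 1; intros [x|q qs]; simpl; [reflexivity|].
rewrite IH; f_equal; f_equal.
induction qs as [|q' qs' IHqs]; simpl; [reflexivity|].
by rewrite IH IHqs.
Qed.

Lemma prim_encK : pcancel prim_enc prim_dec.
Proof. exact: prim_encK_aux. Qed.

HB.instance Definition _ := Equality.copy prim (pcan_type prim_encK).

Definition wseq (w : word) : seq prim := w.1 :: w.2.
Definition bre (w : word) : nat := size (wseq w).

Definition wcat (u v : word) : word := (u.1, u.2 ++ v.1 :: v.2).

Definition Dp (u : word) : prim := PD u.1 u.2.
Definition Dw (u : word) : word := (Dp u, [::]).
Definition Xw (x : X) : word := (PX x, [::]).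

Fixpoint degp (p : prim) : nat :=
  match p with
  | PX _ => 1
  | PD q qs => degp q + sumn (map degp qs)
  end.
Definition degw (w : word) : nat := sumn (map degp (wseq w)).

(* Order (2).  ltp p q means p < q on prime words:
   x < y as in X;  x < D(u');  D(u') < D(v') iff u' < v', where
   u' < v' iff wt(u') < wt(v') lexicographically,
   wt(u) = (deg_X u, u_1, ..., u_n). *)
Fixpoint ltp (p q : prim) {struct p} : bool :=
  match p, q with
  | PX x, PX y => (x < y)%O
  | PX _, PD _ _ => true
  | PD _ _, PX _ => false
  | PD a as_, PD b bs =>
      let da := degp a + sumn (map degp as_) in
      let db := degp b + sumn (map degp bs) in
      (da < db)%N ||
      ((da == db) &&
       (ltp a b ||
        ((a == b) &&
         (fix lex (s t : seq prim) {struct s} : bool :=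
            match s, t with
            | p' :: s', q' :: t' => ltp p' q' || ((p' == q') && lex s' t')
            | [::], _ :: _ => true
            | _, _ => false
            end) as_ bs)))
  end.

Definition wlt (u v : word) : bool := ltp (Dp u) (Dp v).

(* S^star(X): words on X u {star} with exactly one star.
   CStar l r  is  l star r ;  CD l c r  is  l D(c) r  (l, r sequences of
   prime words, possibly empty). *)
Inductive ctx : Type :=
| CStar of seq prim & seq prim
| CD of seq prim & ctx & seq prim.

Definition wmk (l : seq prim) (w : word) (r : seq prim) : word :=
  match l with
  | [::] => (w.1, w.2 ++ r)
  | q :: l' => (q, l' ++ w.1 :: w.2 ++ r)
  end.

Fixpoint subst (u : ctx) (w : word) : word :=
  match u with
  | CStar l r => wmk l w r
  | CD l c r => wmk l (Dw (subst c w)) r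
  end.

End Words.

(* The free K-module K<X;D> on S(X): an element is represented by a   *)
(* formal finite sum  [:: (a1,w1); ...; (an,wn)]  = sum a_i w_i, and  *)
(* two representations denote the same element iff they have the same *)
(* coefficient function (peq).                                         *)
Section Polys.
Context {disp : Order.disp_t} (X : orderType disp) (K : comNzRingType).

Definition poly : Type := seq (K * word X).

Definition coef (f : poly) (w : word X) : K := \sum_(t <- f | t.2 == w) t.1.

Definition peq (f g : poly) : Prop := forall w, coef f w = coef g w.

Definition pmono (w : word X) : poly := [:: (1, w)].
Definition padd (f g : poly) : poly := f ++ g.
Definition pscale (a : K) (f : poly) : poly := [seq (a * t.1, t.2) | t <- f].
Definition psub (f g : poly) : poly := f ++ pscale (-1) g.
Definition pzero : poly := [::].
Definition pmul (f g : poly) : poly :=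
  [seq (t.1 * s.1, wcat t.2 s.2) | t <- f, s <- g].
Definition pD (f : poly) : poly := [seq (t.1, Dw t.2) | t <- f].
Definition psubst (u : ctx X) (f : poly) : poly :=
  [seq (t.1, subst u t.2) | t <- f].

Definition is_lead (f : poly) (w : word X) : Prop :=
  coef f w != 0 /\ forall v, coef f v != 0 -> v != w -> wlt v w.

Definition monic_with (f : poly) (w : word X) : Prop :=
  is_lead f w /\ coef f w = 1.

Definition cong_mod (S : poly -> Prop) (w : word X) (p q : poly) : Prop :=
  exists l : seq (K * ctx X * poly),
    (forall t, List.In t l ->
       S t.2 /\ exists sb, is_lead t.2 sb /\ wlt (subst t.1.2 sb) w) /\
    peq (psub p q) (flatten [seq pscale t.1.1 (psubst t.1.2 t.2) | t <- l]).

Definition GSbasis (S : poly -> Prop) : Prop :=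
  (forall s, S s -> exists sb, monic_with s sb) /\
  (forall f g fb gb, S f -> S g -> monic_with f fb -> monic_with g gb ->
     (forall (a b w : word X), w = wcat fb a -> w = wcat b gb ->
        (bre w < bre fb + bre gb)%N ->
        cong_mod S w (psub (pmul f (pmono a)) (pmul (pmono b) g)) pzero) /\
     (forall u : ctx X, fb = subst u gb ->
        cong_mod S fb (psub f (psubst u g)) pzero)).

Definition Sgen (lam : K) (x y : word X) : poly :=
  [:: (1, Dw (wcat x y)); (-1, wcat (Dw x) y); (-1, wcat x (Dw y));
      (- lam, wcat (Dw x) (Dw y))].

Definition S_diff (lam : K) (p : poly) : Prop :=
  exists x y : word X, peq p (Sgen lam x y).

End Polys.

(* Main.v *)
Require Import Defs.
From HB Require Import structures.
From mathcomp Require Import all_boot all_order all_algebra.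
From Stdlib Require Import Ring Classical.
Set Implicit Arguments. Unset Strict Implicit. Unset Printing Implicit Defensive.
Import Order.TTheory GRing.Theory.

Section W.
Context {disp : Order.disp_t} (X : orderType disp).
Local Notation prim := (prim X).
Local Notation word := (word X).
Local Notation ctx := (ctx X).

Fixpoint lexs (s t : seq prim) : bool :=
  match s, t with
  | p' :: s', q' :: t' => ltp p' q' || ((p' == q') && lexs s' t')
  | [::], _ :: _ => true
  | _, _ => false
  end.

Lemma ltpD (a : prim) as_ b bs : ltp (PD a as_) (PD b bs) =
  ((degp a + sumn (map (@degp _ X) as_) < degp b + sumn (map (@degp _ X) bs))%N ||
  ((degp a + sumn (map (@degp _ X) as_) == degp b + sumn (map (@degp _ X) bs)) &&
   (ltp a b || ((a == b) && lexs as_ bs)))).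
Proof. by []. Qed.

Lemma ltpp : forall p : prim, ltp p p = false.
Proof.
fix IH 1; case=> [x|a as_].
- by rewrite /= ltxx.
- rewrite ltpD ltnn eqxx /= (IH a) eqxx /=.
  elim: as_ => [|q qs IHq] //=. by rewrite (IH q) eqxx.
Qed.

Lemma lexs_cat l s t : lexs (l ++ s) (l ++ t) = lexs s t.
Proof. by elim: l => //= p l ->; rewrite ltpp eqxx. Qed.

Definition diff (s t : seq prim) := exists pre p q s' t',
  s = pre ++ p :: s' /\ t = pre ++ q :: t' /\ ltp p q.

Lemma diff_lexs s t : diff s t -> lexs s t.
Proof. by case=> [pre [p [q [s' [t' [-> [-> H]]]]]]]; rewrite lexs_cat /= H. Qed.

Lemma degp_pos : forall p : prim, (0 < degp p)%N.
Proof.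
fix IH 1; case=> [x|a as_] //=. exact: ltn_addr (IH a).
Qed.

Lemma degw_pos (w : word) : (0 < degw w)%N.
Proof. rewrite /degw /=. exact: ltn_addr (degp_pos _). Qed.

Definition Pw (v w : word) := degw v = degw w /\ diff (wseq v) (wseq w).

Lemma Pw_wlt (v w : word) : Pw v w -> wlt v w.
Proof.
case=> E D; rewrite /wlt /Dp ltpD.
have -> : (degp v.1 + sumn (map (@degp _ X) v.2)) = degw v by [].
have -> : (degp w.1 + sumn (map (@degp _ X) w.2)) = degw w by [].
rewrite E eqxx ltnn /=. exact: (diff_lexs D).
Qed.

Lemma wlt_neq (v w : word) : wlt v w -> v != w.
Proof. by apply: contraTneq => ->; rewrite /wlt ltpp. Qed.

Lemma wseq_wcat (x y : word) : wseq (wcat x y) = wseq x ++ wseq y.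
Proof. by []. Qed.

Lemma degw_cat (x y : word) : degw (wcat x y) = degw x + degw y.
Proof. by rewrite /degw wseq_wcat map_cat sumn_cat. Qed.

Lemma degw_Dw (u : word) : degw (Dw u) = degw u.
Proof. by rewrite /degw /= addn0. Qed.

Lemma wseq_wmk l (w : word) r : wseq (wmk l w r) = l ++ wseq w ++ r.
Proof. by case: l. Qed.

Lemma wseq_inj (u v : word) : wseq u = wseq v -> u = v.
Proof. by case: u => a b; case: v => c d [-> ->]. Qed.

Lemma Pw_wmk l (v w : word) r : Pw v w -> Pw (wmk l v r) (wmk l w r).
Proof.
case=> E [pre [p [q [s' [t' [Hs [Ht H]]]]]]]; split.
  by rewrite /degw !wseq_wmk !map_cat !sumn_cat -!/(degw _) E.
exists (l ++ pre), p, q, (s' ++ r), (t' ++ r).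
by rewrite !wseq_wmk Hs Ht -!catA.
Qed.

Lemma Pw_Dw (v w : word) : Pw v w -> Pw (Dw v) (Dw w).
Proof.
move=> H; split; first by rewrite !degw_Dw; case: H.
by exists [::], (Dp v), (Dp w), [::], [::]; do 2 split=> //; apply: Pw_wlt.
Qed.

Lemma Pw_subst (c : ctx) (v w : word) : Pw v w -> Pw (subst c v) (subst c w).
Proof.
elim: c => [l r | l c IH r] /= H; apply: Pw_wmk => //. exact: Pw_Dw (IH H).
Qed.

Lemma degp_lt_Dp (p : prim) (u : word) : (degp p < degw u)%N -> ltp p (Dp u).
Proof. case: p => [x|a as_] H //. rewrite /Dp ltpD. by apply/orP; left. Qed.

Lemma degw_ltcat (x y : word) : (degw x < degw (wcat x y))%N.
Proof. by rewrite degw_cat -{1}(addn0 (degw x)) ltn_add2l degw_pos. Qed.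

Lemma degp1_le (x : word) : (degp x.1 <= degw x)%N.
Proof. by rewrite /degw /= leq_addr. Qed.

Lemma P1 (x y : word) : Pw (wcat (Dw x) y) (Dw (wcat x y)).
Proof.
split; first by rewrite !degw_cat !degw_Dw degw_cat.
exists [::], (Dp x), (Dp (wcat x y)), (wseq y), [::]; do 2 split=> //.
apply: degp_lt_Dp; exact: degw_ltcat.
Qed.

Lemma P2 (x y : word) : Pw (wcat x (Dw y)) (Dw (wcat x y)).
Proof.
split; first by rewrite !degw_cat !degw_Dw degw_cat.
exists [::], x.1, (Dp (wcat x y)), (x.2 ++ [:: Dp y]), [::]; do 2 split=> //.
apply: degp_lt_Dp; exact: leq_ltn_trans (degp1_le x) (degw_ltcat x y).
Qed.

Lemma P3 (x y : word) : Pw (wcat (Dw x) (Dw y)) (Dw (wcat x y)).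
Proof.
split; first by rewrite !degw_cat !degw_Dw degw_cat.
exists [::], (Dp x), (Dp (wcat x y)), [:: Dp y], [::]; do 2 split=> //.
apply: degp_lt_Dp; exact: degw_ltcat.
Qed.

Lemma nlt_rev (p : prim) (u : word) : (degp p < degw u)%N ->
  ltp (Dp u) p = false /\ (Dp u == p) = false.
Proof.
move=> H; split; last first.
  apply/negbTE/eqP => E; move: H; rewrite -E.
  by change (degp (Dp u)) with (degw u); rewrite ltnn.
case: p H => [x|a as_] H //.
rewrite /Dp ltpD.
have -> : (degp u.1 + sumn (map (@degp _ X) u.2)) = degw u by [].
by rewrite ltnNge (ltnW H) /= (gtn_eqF H).
Qed.

Lemma asym_first (v z : word) : degw v = degw z -> (degp v.1 < degw z)%N ->
  ~~ wlt (Dw z) v.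
Proof.
move=> E H; rewrite /wlt.
change (Dp (Dw z)) with (PD (Dp z) [::]).
rewrite /Dp ltpD.
have -> : (degp v.1 + sumn (map (@degp _ X) v.2)) = degw v by [].
have -> : degp (PD z.1 z.2) + sumn (map (@degp _ X) [::]) = degw z by rewrite /= addn0.
have [A B] := nlt_rev H; rewrite /Dp in A B.
by rewrite E ltnn eqxx A B.
Qed.

Lemma wcatA (x y z : word) : wcat x (wcat y z) = wcat (wcat x y) z.
Proof. by apply: wseq_inj; rewrite !wseq_wcat catA. Qed.

End W.

Section C.
Context {disp : Order.disp_t} (X : orderType disp).
Local Notation prim := (prim X).
Local Notation word := (word X).
Local Notation ctx := (ctx X).

Definition cL (c : ctx) : seq prim := match c with CStar l _ => l | CD l _ _ => l end.
Definition cR (c : ctx) : seq prim := match c with CStar _ r => r | CD _ _ r => r end.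
Definition inner (c : ctx) (w : word) : word :=
  match c with CStar _ _ => w | CD _ c' _ => Dw (subst c' w) end.
Definition cset (c : ctx) l r : ctx :=
  match c with CStar _ _ => CStar l r | CD _ c' _ => CD l c' r end.

Lemma subst_inner (c : ctx) w : subst c w = wmk (cL c) (inner c w) (cR c).
Proof. by case: c. Qed.
Lemma subst_cset (c : ctx) l r w : subst (cset c l r) w = wmk l (inner c w) r.
Proof. by case: c. Qed.

Definition cI : ctx := CStar [::] [::].
Definition cD (c : ctx) : ctx := CD [::] c [::].
Definition cl (x : word) (c : ctx) := cset c (wseq x ++ cL c) (cR c).
Definition cr (c : ctx) (y : word) := cset c (cL c) (cR c ++ wseq y).

Lemma subst_cI (w : word) : subst cI w = w.
Proof. by case: w => a b /=; rewrite cats0. Qed.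
Lemma subst_cD c (w : word) : subst (cD c) w = Dw (subst c w).
Proof. by []. Qed.
Lemma subst_cl x c (w : word) : subst (cl x c) w = wcat x (subst c w).
Proof. apply: wseq_inj; by rewrite /cl subst_cset (subst_inner c) wseq_wcat !wseq_wmk -catA. Qed.
Lemma subst_cr c y (w : word) : subst (cr c y) w = wcat (subst c w) y.
Proof. apply: wseq_inj; by rewrite /cr subst_cset (subst_inner c) wseq_wcat !wseq_wmk -!catA. Qed.

Lemma cat_split (a b L R : seq prim) p : a ++ b = L ++ p :: R ->
  (exists R1, a = L ++ p :: R1 /\ R = R1 ++ b) \/ (exists L2, L = a ++ L2 /\ b = L2 ++ p :: R).
Proof.
elim: a L => [|h a IH] L /=.
  by move=> ->; right; exists L.
case: L => [|h' L] /=.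
  by case=> -> <-; left; exists a.
case=> -> /IH [[R1 [-> ->]]|[L2 [-> ->]]]; [left; exists R1|right; exists L2]; by [].
Qed.

Lemma cat_split2 (a b c d : seq prim) : a ++ b = c ++ d ->
  (exists m, c = a ++ m /\ b = m ++ d) \/ (exists m, a = c ++ m /\ d = m ++ b).
Proof.
elim: a c => [|h a IH] c /=.
  by move=> ->; left; exists c.
case: c => [|h' c] /=.
  by move=> <-; right; exists (h :: a).
case=> -> /IH [[m [-> ->]]|[m [-> ->]]]; [left|right]; exists m; by [].
Qed.

Lemma inner_Dw (c : ctx) z : exists z0, inner c (Dw z) = Dw z0.
Proof. case: c => [l r|l c r] /=; by eexists. Qed.

Lemma split_deep (x y z : word) (c : ctx) : wcat x y = subst c (Dw z) ->
  (exists c1, x = subst c1 (Dw z) /\ forall w, subst c w = wcat (subst c1 w) y) \/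
  (exists c2, y = subst c2 (Dw z) /\ forall w, subst c w = wcat x (subst c2 w)).
Proof.
move=> E; have [z0 Hz0] := inner_Dw c z.
have E' := congr1 (@wseq _ X) E; rewrite wseq_wcat subst_inner wseq_wmk Hz0 in E'; change (wseq x ++ wseq y = cL c ++ Dp z0 :: cR c) in E'.
case: (cat_split E') => [[R1 [Hx HR]]|[L2 [HL Hy]]].
- left; exists (cset c (cL c) R1); split.
    by apply: wseq_inj; rewrite Hx subst_cset wseq_wmk Hz0.
  move=> w; apply: wseq_inj.
  by rewrite subst_cset (subst_inner c) wseq_wcat !wseq_wmk HR -!catA.
- right; exists (cset c L2 (cR c)); split.
    by apply: wseq_inj; rewrite Hy subst_cset wseq_wmk Hz0.
  move=> w; apply: wseq_inj.
  by rewrite subst_cset (subst_inner c) wseq_wcat !wseq_wmk HL -!catA.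
Qed.

Lemma split_shallow (x y x' y' : word) : wcat x y = wcat x' y' ->
  (x = x' /\ y = y') \/ (exists m, x' = wcat x m /\ y = wcat m y') \/
  (exists m, x = wcat x' m /\ y' = wcat m y).
Proof.
move=> /(congr1 (@wseq _ X)); rewrite !wseq_wcat => /cat_split2 [[[|h t] [E1 E2]]|[[|h t] [E1 E2]]].
- by left; rewrite cats0 in E1; split; apply: wseq_inj.
- by right; left; exists (h, t); split; apply: wseq_inj.
- by left; rewrite cats0 in E1; split; apply: wseq_inj.
- by right; right; exists (h, t); split; apply: wseq_inj.
Qed.

Lemma incl_cases (z w : word) (u : ctx) : Dw z = subst u w ->
  (forall v, subst u v = v) /\ Dw z = w \/
  exists c, (forall v, subst u v = Dw (subst c v)) /\ z = subst c w.
Proof.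
case: u => [l r|l c r] /=; case: l => [|q l] /=.
- case=> E1 E2; have Er : r = [::] by move: E2; case: r => // ? ?; case: (w.2).
  subst r; left; split; first by case=> a b /=; rewrite cats0.
  by case: w E1 E2 => a b /= <-; rewrite cats0 => <-.
- by case=> _; case: l.
- rewrite /Dw => -[E1 E2 <-]; right; exists c; split => //.
  by case: z E1 E2 => a b /= -> ->; case: (subst c w).
- by rewrite /Dw => -[_]; case: l.
Qed.

Lemma catl_inj (l s t : seq prim) : l ++ s = l ++ t -> s = t.
Proof. by elim: l => //= a l IH [] /IH. Qed.

Lemma catr_inj (s t r : seq prim) : s ++ r = t ++ r -> s = t.
Proof.
move=> E; have Hs : size s = size t.
  by move: (congr1 size E); rewrite !size_cat => /addIn.
by move/eqP: E; rewrite eqseq_cat // => /andP [/eqP].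
Qed.

Lemma subst_inj (u : ctx) : injective (subst u).
Proof.
elim: u => [l r|l c IH r] v w /= /(congr1 (@wseq _ X)); rewrite !wseq_wmk
  => /catl_inj /catr_inj.
- exact: wseq_inj.
- case=> E1 E2; apply: IH; move: E1 E2.
  by case: (subst c v) => a b; case: (subst c w) => a' b' /= -> ->.
Qed.

End C.
Arguments cI {disp X}.

Section P.
Context {disp : Order.disp_t} (X : orderType disp) (K : comNzRingType) (lam : K).
Local Open Scope ring_scope.
Local Notation word := (word X).
Local Notation ctx := (ctx X).
Local Notation poly := (@Defs.poly disp X K).

Definition kadd (x y : K) : K := x + y.
Definition kmul (x y : K) : K := x * y.
Definition kopp (x : K) : K := - x.
Definition ksub (x y : K) : K := x - y.
Definition k0 : K := 0.
Definition k1 : K := 1.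
Definition knat (n : nat) : K := n%:R.
Lemma Kth : @ring_theory (GRing.ComNzRing.sort K) k0 k1 kadd kmul ksub kopp eq.
Proof. rewrite /kadd/kmul/kopp/ksub/k0/k1. split=> //; [exact: add0r|exact: addrC|exact: addrA|exact: mul1r|exact: mulrC|exact: mulrA|exact: mulrDl|exact: subrr]. Qed.
Add Ring Kr : Kth.
Ltac knorm :=
  repeat match goal with
  | |- context [@Algebra.add ?i ?a ?b] => change (@Algebra.add i a b) with (kadd a b)
  | |- context [@GRing.mul ?i ?a ?b] => change (@GRing.mul i a b) with (kmul a b)
  | |- context [@Algebra.opp ?i ?a] => change (@Algebra.opp i a) with (kopp a)
  | |- context [@Algebra.natmul ?i (@GRing.one ?j) ?n] => change (@Algebra.natmul i (@GRing.one j) n) with (knat n)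
  | |- context [@Algebra.zero ?i] => change (@Algebra.zero i) with k0
  | |- context [@GRing.one ?i] => change (@GRing.one i) with k1
  end.
Ltac kring := match goal with |- ?a = ?b => change (@eq (GRing.ComNzRing.sort K) a b) end; knorm; ring.

Arguments cl : simpl never. Arguments cr : simpl never. Arguments cI : simpl never.
Arguments cD : simpl never. Arguments wcat : simpl never. Arguments Dw : simpl never.
Arguments subst : simpl never. Arguments Sgen : simpl never.

Lemma coef_nil w : coef ([::] : poly) w = 0.
Proof. by rewrite /coef big_nil. Qed.
Lemma coef_cons (a : K) (v : word) (f : poly) w :
  coef ((a, v) :: f) w = a * (v == w)%:R + coef f w.
Proof. rewrite /coef big_cons /=; case: eqP => _; by rewrite ?mulr1 ?mulr0 ?add0r. Qed.
Lemma coef_cat (f g : poly) w : coef (f ++ g) w = coef f w + coef g w.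
Proof. by rewrite /coef big_cat. Qed.
Lemma coef_scale a (f : poly) w : coef (pscale a f) w = a * coef f w.
Proof. by rewrite /coef big_map mulr_sumr. Qed.
Lemma coef_psub (f g : poly) w : coef (psub f g) w = coef f w - coef g w.
Proof. by rewrite /psub coef_cat coef_scale mulN1r. Qed.
Lemma coef_psubst (u : ctx) (f : poly) v : coef (psubst u f) (subst u v) = coef f v.
Proof. rewrite /coef big_map; apply: eq_bigl => t /=. by rewrite (inj_eq (@subst_inj _ X u)). Qed.
Lemma coef_psubst0 (u : ctx) (f : poly) w : (forall v, subst u v <> w) -> coef (psubst u f) w = 0.
Proof. move=> H; rewrite /coef big_map big1 // => t /eqP E; exfalso; exact: H E. Qed.
Lemma peq_psubst (u : ctx) (f g : poly) : peq f g -> peq (psubst u f) (psubst u g).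
Proof.
move=> H w; case: (classic (exists v, subst u v = w)) => [[v <-]|N].
  by rewrite !coef_psubst.
by rewrite !coef_psubst0 // => v E; apply: N; exists v.
Qed.
Lemma peq_psubst_id (u : ctx) (f : poly) : (forall v, subst u v = v) -> peq (psubst u f) f.
Proof. by move=> H w; have := coef_psubst u f w; rewrite H. Qed.
Lemma coef_psubst_cons (u : ctx) a v (f : poly) w :
  coef (psubst u ((a, v) :: f)) w = a * (subst u v == w)%:R + coef (psubst u f) w.
Proof. exact: coef_cons. Qed.
Lemma coef_psubst_nil (u : ctx) w : coef (psubst u ([::] : poly)) w = 0.
Proof. exact: coef_nil. Qed.

Definition flatl (l : seq (K * ctx * poly)) : poly :=
  flatten [seq pscale t.1.1 (psubst t.1.2 t.2) | t <- l].
Lemma coef_flat_nil w : coef (flatl [::]) w = 0.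
Proof. exact: coef_nil. Qed.
Lemma coef_flat_cons a c s l w :
  coef (flatl (((a, c), s) :: l)) w = a * coef (psubst c s) w + coef (flatl l) w.
Proof. by rewrite /flatl /= coef_cat coef_scale. Qed.

Lemma cong_intro (S : poly -> Prop) w (p q : poly) l :
  (forall t, List.In t l -> S t.2 /\ exists sb, is_lead t.2 sb /\ wlt (subst t.1.2 sb) w) ->
  (forall v, coef p v - coef q v = coef (flatl l) v) -> cong_mod S w p q.
Proof. move=> H1 H2; exists l; split => // v; rewrite coef_psub; exact: H2. Qed.

Lemma cong_peq2 (S : poly -> Prop) w (p q p' q' : poly) :
  (forall v, coef p v - coef q v = coef p' v - coef q' v) ->
  cong_mod S w p q -> cong_mod S w p' q'.
Proof. move=> E [l [H1 H2]]; exists l; split => // v; by rewrite coef_psub -E -coef_psub. Qed.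

Lemma cong_neg (S : poly -> Prop) w (p q : poly) :
  cong_mod S w p q -> cong_mod S w q p.
Proof.
case=> l [H1 H2]; exists [seq ((- t.1.1, t.1.2), t.2) | t <- l]; split.
  move=> t /List.in_map_iff [t0 [<- /H1]] /=; by [].
move=> v; rewrite coef_psub; have := H2 v; rewrite coef_psub => E.
have -> : coef (flatten [seq pscale t.1.1 (psubst t.1.2 t.2) | t <- [seq ((- t.1.1, t.1.2), t.2) | t <- l]]) v
   = - coef (flatl l) v.
  elim: l {H1 H2 E} => [|[[a c] s] l IH]; first by rewrite coef_nil oppr0.
  rewrite coef_flat_cons /= coef_cat coef_scale IH; kring.
rewrite -/(flatl l) -E; kring.
Qed.

Lemma coef_Sgen (x y w : word) : coef (Sgen lam x y) w =
  (Dw (wcat x y) == w)%:R - (wcat (Dw x) y == w)%:R - (wcat x (Dw y) == w)%:R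
  - lam * (wcat (Dw x) (Dw y) == w)%:R.
Proof. rewrite /Sgen !coef_cons coef_nil. kring. Qed.

Lemma coef_Sgen_subst (c : ctx) (x y w : word) : coef (psubst c (Sgen lam x y)) w =
  (subst c (Dw (wcat x y)) == w)%:R - (subst c (wcat (Dw x) y) == w)%:R
  - (subst c (wcat x (Dw y)) == w)%:R - lam * (subst c (wcat (Dw x) (Dw y)) == w)%:R.
Proof. rewrite /Sgen !coef_psubst_cons coef_psubst_nil. kring. Qed.


Lemma Sgen_cases (x y v : word) : coef (Sgen lam x y) v != 0 ->
  v = Dw (wcat x y) \/ v = wcat (Dw x) y \/ v = wcat x (Dw y) \/ v = wcat (Dw x) (Dw y).
Proof.
rewrite coef_Sgen.
case: (Dw (wcat x y) =P v) => [<-|_]; first by left.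
case: (wcat (Dw x) y =P v) => [<-|_]; first by right; left.
case: (wcat x (Dw y) =P v) => [<-|_]; first by right; right; left.
case: (wcat (Dw x) (Dw y) =P v) => [<-|_]; first by right; right; right.
by rewrite /= !mulr0 !subr0 eqxx.
Qed.

Lemma coef_Sgen_lead (x y : word) : coef (Sgen lam x y) (Dw (wcat x y)) = 1.
Proof.
rewrite coef_Sgen eqxx (negbTE (wlt_neq (Pw_wlt (P1 x y))))
  (negbTE (wlt_neq (Pw_wlt (P2 x y)))) (negbTE (wlt_neq (Pw_wlt (P3 x y)))).
by rewrite /= mulr0 !subr0.
Qed.

Lemma lead_Sgen (x y : word) : monic_with (Sgen lam x y) (Dw (wcat x y)).
Proof.
split; last exact: coef_Sgen_lead.
split; first by rewrite coef_Sgen_lead oner_neq0.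
move=> v /Sgen_cases [->|[->|[->|->]]]; first by rewrite eqxx.
- by move=> _; apply: Pw_wlt; apply: P1.
- by move=> _; apply: Pw_wlt; apply: P2.
- by move=> _; apply: Pw_wlt; apply: P3.
Qed.

Lemma monic_peq (f g : poly) w : peq f g -> monic_with g w -> monic_with f w.
Proof.
move=> H [[nz lt] c1]; split; last by rewrite H.
split; first by rewrite H.
by move=> v; rewrite H; apply: lt.
Qed.

Lemma lead_unique (f : poly) (x y fb : word) : peq f (Sgen lam x y) -> is_lead f fb ->
  fb = Dw (wcat x y).
Proof.
move=> H [nz lt]; rewrite H in nz.
have [//|Hv] := Sgen_cases nz.
have NE : Dw (wcat x y) != fb.
  by case: Hv => [->|[->|->]]; rewrite eq_sym; apply: wlt_neq; apply: Pw_wlt;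
    [apply: P1|apply: P2|apply: P3].
have W : wlt (Dw (wcat x y)) fb.
  by apply: lt => //; rewrite H coef_Sgen_lead oner_neq0.
exfalso; move: W; apply/negP.
case: Hv => [->|[->|->]].
- apply: asym_first; first by rewrite -(degw_Dw (wcat x y)); exact: (proj1 (P1 x y)).
  exact: degw_ltcat.
- apply: asym_first; first by rewrite -(degw_Dw (wcat x y)); exact: (proj1 (P2 x y)).
  exact: leq_ltn_trans (degp1_le x) (degw_ltcat x y).
- apply: asym_first; first by rewrite -(degw_Dw (wcat x y)); exact: (proj1 (P3 x y)).
  exact: degw_ltcat.
Qed.

Lemma S_Sgen (x y : word) : S_diff lam (Sgen lam x y).
Proof. by exists x, y. Qed.

Lemma shallow (x m y' : word) (F G : poly) :
  peq F (Sgen lam x (wcat m y')) -> peq G (Sgen lam (wcat x m) y') ->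
  cong_mod (S_diff lam) (Dw (wcat x (wcat m y'))) (psub F G) (pzero X K).
Proof.
move=> HF HG.
pose L : seq (K * ctx * poly) := [:: ((-1, cl x cI), Sgen lam m y'); ((- lam, cl (Dw x) cI), Sgen lam m y');
   ((1, cr cI y'), Sgen lam x m); ((lam, cr cI (Dw y')), Sgen lam x m)].
apply: (cong_intro (l := L)).
- move=> t /=; case=> [<-|[<-|[<-|[<-|[]]]]]; (split; first exact: S_Sgen);
    (eexists; split; first exact: (lead_Sgen _ _).1); rewrite /=.
  + rewrite subst_cl subst_cI; apply: Pw_wlt; exact: P2.
  + rewrite subst_cl subst_cI; apply: Pw_wlt; exact: P3.
  + rewrite subst_cr subst_cI wcatA; apply: Pw_wlt; exact: P1.
  + rewrite subst_cr subst_cI wcatA; apply: Pw_wlt; exact: P3.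
- move=> v; rewrite coef_nil subr0 coef_psub HF HG !coef_flat_cons coef_flat_nil
    !coef_Sgen !coef_Sgen_subst !subst_cl !subst_cr !subst_cI !wcatA.
  kring.
Qed.


Lemma deep_x (x y x' y' : word) (c1 u : ctx) (F G : poly) :
  x = subst c1 (Dw (wcat x' y')) ->
  (forall w, subst u w = Dw (wcat (subst c1 w) y)) ->
  peq F (Sgen lam x y) -> peq G (Sgen lam x' y') ->
  cong_mod (S_diff lam) (Dw (wcat x y)) (psub F (psubst u G)) (pzero X K).
Proof.
move=> Hx Hu HF HG.
pose L : seq (K * ctx * poly) :=
  [:: ((-1, cr (cD c1) y), Sgen lam x' y'); ((-1, cr c1 (Dw y)), Sgen lam x' y');
      ((- lam, cr (cD c1) (Dw y)), Sgen lam x' y');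
      ((1, cI), Sgen lam (subst c1 (wcat (Dw x') y')) y);
      ((1, cI), Sgen lam (subst c1 (wcat x' (Dw y'))) y);
      ((lam, cI), Sgen lam (subst c1 (wcat (Dw x') (Dw y'))) y)].
apply: (cong_intro (l := L)).
- move=> t /=; case=> [<-|[<-|[<-|[<-|[<-|[<-|[]]]]]]]; (split; first exact: S_Sgen);
    (eexists; split; first exact: (lead_Sgen _ _).1); rewrite /=.
  + rewrite subst_cr subst_cD -Hx; apply: Pw_wlt; exact: P1.
  + rewrite subst_cr -Hx; apply: Pw_wlt; exact: P2.
  + rewrite subst_cr subst_cD -Hx; apply: Pw_wlt; exact: P3.
  + rewrite subst_cI; apply: Pw_wlt.
    have := Pw_subst (cD (cr c1 y)) (P1 x' y'); by rewrite !subst_cD !subst_cr -Hx.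
  + rewrite subst_cI; apply: Pw_wlt.
    have := Pw_subst (cD (cr c1 y)) (P2 x' y'); by rewrite !subst_cD !subst_cr -Hx.
  + rewrite subst_cI; apply: Pw_wlt.
    have := Pw_subst (cD (cr c1 y)) (P3 x' y'); by rewrite !subst_cD !subst_cr -Hx.
- move=> v; rewrite coef_nil subr0 coef_psub HF (peq_psubst u HG) !coef_flat_cons coef_flat_nil
    !coef_Sgen !coef_Sgen_subst !Hu !subst_cr !subst_cD !subst_cI -Hx.
  kring.
Qed.

Lemma deep_y (x y x' y' : word) (c2 u : ctx) (F G : poly) :
  y = subst c2 (Dw (wcat x' y')) ->
  (forall w, subst u w = Dw (wcat x (subst c2 w))) ->
  peq F (Sgen lam x y) -> peq G (Sgen lam x' y') ->
  cong_mod (S_diff lam) (Dw (wcat x y)) (psub F (psubst u G)) (pzero X K).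
Proof.
move=> Hy Hu HF HG.
pose L : seq (K * ctx * poly) :=
  [:: ((-1, cl (Dw x) c2), Sgen lam x' y'); ((-1, cl x (cD c2)), Sgen lam x' y');
      ((- lam, cl (Dw x) (cD c2)), Sgen lam x' y');
      ((1, cI), Sgen lam x (subst c2 (wcat (Dw x') y')));
      ((1, cI), Sgen lam x (subst c2 (wcat x' (Dw y'))));
      ((lam, cI), Sgen lam x (subst c2 (wcat (Dw x') (Dw y'))))].
apply: (cong_intro (l := L)).
- move=> t /=; case=> [<-|[<-|[<-|[<-|[<-|[<-|[]]]]]]]; (split; first exact: S_Sgen);
    (eexists; split; first exact: (lead_Sgen _ _).1); rewrite /=.
  + rewrite subst_cl -Hy; apply: Pw_wlt; exact: P1.
  + rewrite subst_cl subst_cD -Hy; apply: Pw_wlt; exact: P2.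
  + rewrite subst_cl subst_cD -Hy; apply: Pw_wlt; exact: P3.
  + rewrite subst_cI; apply: Pw_wlt.
    have := Pw_subst (cD (cl x c2)) (P1 x' y'); by rewrite !subst_cD !subst_cl -Hy.
  + rewrite subst_cI; apply: Pw_wlt.
    have := Pw_subst (cD (cl x c2)) (P2 x' y'); by rewrite !subst_cD !subst_cl -Hy.
  + rewrite subst_cI; apply: Pw_wlt.
    have := Pw_subst (cD (cl x c2)) (P3 x' y'); by rewrite !subst_cD !subst_cl -Hy.
- move=> v; rewrite coef_nil subr0 coef_psub HF (peq_psubst u HG) !coef_flat_cons coef_flat_nil
    !coef_Sgen !coef_Sgen_subst !Hu !subst_cl !subst_cD !subst_cI -Hy.
  kring.
Qed.

End P.

Lemma Dw_inj {disp : Order.disp_t} (X : orderType disp) : injective (@Dw _ X).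
Proof. by case=> a b [c d] /= [-> ->]. Qed.

Theorem theorem5p3 (disp : Order.disp_t) (X : orderType disp)
  (wfX : well_founded (fun a b : X => (a < b)%O))
  (K : comNzRingType) (lam : K) :
  GSbasis (S_diff (X := X) lam).
Proof.
split.
- move=> s [x [y H]]; exists (Dw (wcat x y)); exact: monic_peq H (lead_Sgen lam x y).
- move=> f g fb gb [x [y Hf]] [x' [y' Hg]] Mf Mg.
  have Efb := lead_unique Hf Mf.1; have Egb := lead_unique Hg Mg.1; subst fb gb.
  split.
  + move=> a b w E1 _; rewrite E1 /bre wseq_wcat size_cat /=.
    by rewrite ltn_add2l ltnS ltn0.
  + move=> u E; case: (incl_cases E) => [[Hid E2] | [c [Hu Ez]]].
    * have Exy := Dw_inj E2.
      apply: (cong_peq2 (p := psub f g) (q := pzero X K)).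
        by move=> v; rewrite !coef_psub (peq_psubst_id g Hid v).
      case: (split_shallow Exy) => [[Ex Ey]|[[m [Ex' Ey]]|[m [Ex Ey']]]].
      - subst x' y'; apply: (cong_intro (l := [::])) => // v.
        by rewrite coef_flat_nil /pzero coef_psub Hf Hg subrr subr0.
      - subst x' y; exact: shallow.
      - subst x y'.
        apply: (cong_peq2 (p := pzero X K) (q := psub g f)).
          by move=> v; rewrite !coef_psub /pzero coef_nil sub0r opprB subr0.
        apply: cong_neg; rewrite -wcatA; exact: shallow.
    * case: (split_deep Ez) => [[c1 [Hx Hc]]|[c2 [Hy Hc]]].
      - by apply: (deep_x Hx _ Hf Hg) => w; rewrite Hu Hc.
      - by apply: (deep_y Hy _ Hf Hg) => w; rewrite Hu Hc.
Qed.
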